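(* Let $f\in\mathbb{R}[z_1,\dots,z_n]$ be homogeneous. Then the hyperbolicity cones of $f$ are exactly the connected components of $\mathcal{I}(f)^{\mathsf c}=\mathbb{R}^n\setminus\mathcal{I}(f)$.
   Context: For $f\in\mathbb{C}[z_1,\dots,z_n]$, $\mathcal{V}(f)\subseteq\mathbb{C}^n$ denotes its complex zero set and the imaginary projection of $f$ is $\mathcal{I}(f)=\{\Im(\mathbf z):\mathbf z\in\mathcal V(f)\}\subseteq\mathbb{R}^n$, where $\Im$ is taken componentwise. A homogeneous polynomial $f$ is hyperbolic in direction $\mathbf e\in\mathbb{R}^n$ if $f(\mathbf e)\neq 0$ and for every $\mathbf x\in\mathbb{R}^n$ the univariate polynomial $t\mapsto f(\mathbf x+t\mathbf e)$ has only real roots. In that case the hyperbolicity cone of $f$ with respect to $\mathbf e$ is $C(\mathbf e)=\{\mathbf x\in\mathbb{R}^n: f(\mathbf x+t\mathbf e)=0\Rightarrow t<0\}$. The hyperbolicity cones of $f$ are the sets $C(\mathbf e)$ for all directions $\mathbf e$ in which $f$ is hyperbolic. *)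

(* Defs.v *)
From Stdlib Require Import Reals List.
From mathcomp Require Import ssreflect ssrfun ssrbool eqtype ssrnat seq fintype.
Open Scope R_scope.

Definition C := (R * R)%type.
Definition Cre (z : C) : R := fst z.
Definition Cim (z : C) : R := snd z.
Definition RtoC (x : R) : C := (x, 0).
Definition Cadd (z w : C) : C := (fst z + fst w, snd z + snd w).
Definition Cmul (z w : C) : C :=
  (fst z * fst w - snd z * snd w, fst z * snd w + snd z * fst w).
Fixpoint Cpow (z : C) (k : nat) : C :=
  match k with O => (1, 0) | S k' => Cmul z (Cpow z k') end.
Definition C0 : C := (0, 0).

(* A polynomial is represented by a finite list of terms (coefficient, exponent
   vector); it denotes the sum of its terms. *)
Definition monomial (n : nat) := (R * ('I_n -> nat))%type.
Definition rpoly (n : nat) := list (monomial n).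

Definition mdeg {n : nat} (a : 'I_n -> nat) : nat :=
  List.fold_right (fun i s => (a i + s)%nat) O (enum 'I_n).

Definition mon_eval {n : nat} (m : monomial n) (z : 'I_n -> C) : C :=
  List.fold_right (fun i acc => Cmul (Cpow (z i) (snd m i)) acc)
                  (RtoC (fst m)) (enum 'I_n).

Definition peval {n : nat} (f : rpoly n) (z : 'I_n -> C) : C :=
  List.fold_right (fun m acc => Cadd (mon_eval m z) acc) C0 f.

Definition homogeneous {n : nat} (f : rpoly n) : Prop :=
  exists d : nat, forall m, List.In m f -> fst m <> 0 -> mdeg (snd m) = d.

Definition zero_set {n : nat} (f : rpoly n) (z : 'I_n -> C) : Prop :=
  peval f z = C0.

Definition imag_proj {n : nat} (f : rpoly n) (y : 'I_n -> R) : Prop :=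
  exists z : 'I_n -> C, zero_set f z /\ forall i, Cim (z i) = y i.

Definition line_pt {n : nat} (x e : 'I_n -> R) (t : C) : 'I_n -> C :=
  fun i => Cadd (RtoC (x i)) (Cmul t (RtoC (e i))).

Definition hyperbolic {n : nat} (f : rpoly n) (e : 'I_n -> R) : Prop :=
  peval f (fun i => RtoC (e i)) <> C0 /\
  forall (x : 'I_n -> R) (t : C), peval f (line_pt x e t) = C0 -> Cim t = 0.

Definition hyp_cone {n : nat} (f : rpoly n) (e : 'I_n -> R) (x : 'I_n -> R) : Prop :=
  forall t : R, peval f (line_pt x e (RtoC t)) = C0 -> t < 0.

Definition dist {n : nat} (x y : 'I_n -> R) : R :=
  sqrt (List.fold_right (fun i s => (x i - y i) ^ 2 + s) 0 (enum 'I_n)).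

Definition is_open {n : nat} (U : ('I_n -> R) -> Prop) : Prop :=
  forall x, U x -> exists eps, 0 < eps /\ forall y, dist x y < eps -> U y.

Definition connected {n : nat} (S : ('I_n -> R) -> Prop) : Prop :=
  ~ exists U V : ('I_n -> R) -> Prop,
      is_open U /\ is_open V /\
      (forall x, S x -> U x \/ V x) /\
      (exists x, S x /\ U x) /\ (exists x, S x /\ V x) /\
      (forall x, S x -> U x -> V x -> False).

Definition connected_component {n : nat} (A K : ('I_n -> R) -> Prop) : Prop :=
  (exists x, K x) /\ (forall x, K x -> A x) /\ connected K /\
  forall K' : ('I_n -> R) -> Prop,
    connected K' -> (forall x, K x -> K' x) -> (forall x, K' x -> A x) ->
    forall x, K' x -> K x.

(* Main.v *)
From Stdlib Require Import Reals Lra Psatz List FunctionalExtensionality PropExtensionality Classical.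
From Coquelicot Require Import Complex.
Require Import Defs.
From mathcomp Require Import ssreflect ssrfun ssrbool eqtype ssrnat seq fintype.
Open Scope R_scope.

Lemma Cadd_E (a b : Defs.C) : Cadd a b = Cplus a b. Proof. reflexivity. Qed.
Lemma Cmul_E (a b : Defs.C) : Cmul a b = Cmult a b. Proof. reflexivity. Qed.
Lemma RtoC_E (x : R) : Defs.RtoC x = Complex.RtoC x. Proof. reflexivity. Qed.
Lemma C0_E : C0 = Complex.RtoC 0. Proof. reflexivity. Qed.
Lemma Cpow_E (z : Defs.C) k : Defs.Cpow z k = Complex.Cpow z k.
Proof. induction k; simpl; [reflexivity| rewrite IHk; reflexivity]. Qed.
Lemma Cim_E (z : Defs.C) : Cim z = Im z. Proof. reflexivity. Qed.
Lemma Cre_E (z : Defs.C) : Cre z = Re z. Proof. reflexivity. Qed.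

Ltac cnorm := rewrite ?Cadd_E ?Cmul_E ?RtoC_E ?C0_E ?Cpow_E ?Cim_E ?Cre_E.
Ltac cring := change Defs.C with Complex.C in *; match goal with |- @eq _ ?a ?b => change (@eq Complex.C a b); ring end.
Ltac ceq := apply injective_projections; simpl; ring.

Section Poly.
Variable n : nat.
Implicit Types (z w : 'I_n -> Complex.C) (x y e : 'I_n -> R).

Definition idx := enum 'I_n.

Lemma In_idx (i : 'I_n) : List.In i idx.
Proof.
  unfold idx. have : (i \in enum 'I_n) by rewrite mem_enum.
  generalize (enum 'I_n). intros l. induction l as [|a l IH]; simpl.
  - by rewrite in_nil.
  - rewrite in_cons => /orP [/eqP ->|H]; [left; reflexivity| right; apply IH, H].
Qed.

Fixpoint lsum (h : 'I_n -> R) (l : list 'I_n) : R :=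
  match l with nil => 0 | a :: l' => h a + lsum h l' end.

Lemma fold_lsum (h : 'I_n -> R) l : List.fold_right (fun i s => h i + s) 0 l = lsum h l.
Proof. induction l; [reflexivity| simpl; f_equal; exact IHl]. Qed.

Lemma lsum_nonneg (h : 'I_n -> R) l : (forall j, 0 <= h j) -> 0 <= lsum h l.
Proof. intros Hh; induction l as [|a l IH]; simpl; [lra|]. specialize (Hh a); lra. Qed.

Lemma lsum_ge (h : 'I_n -> R) l i : (forall j, 0 <= h j) -> List.In i l -> h i <= lsum h l.
Proof.
  intros Hh; induction l as [|a l IH]; simpl; [tauto|].
  pose proof (lsum_nonneg h l Hh).
  intros [->|H']; [lra| specialize (IH H'); specialize (Hh a); lra].
Qed.

Lemma lsum_ext (h g : 'I_n -> R) l : (forall j, h j = g j) -> lsum h l = lsum g l.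
Proof. intros H; induction l; simpl; [reflexivity| rewrite H IHl; reflexivity]. Qed.

Lemma lsum_sq (h : 'I_n -> R) l : (forall j, 0 <= h j) ->
  lsum (fun i => (h i)^2) l <= (lsum h l)^2.
Proof.
  intros Hh; induction l as [|a l IH]; cbn [lsum]; [lra|].
  pose proof (lsum_nonneg h l Hh). specialize (Hh a).
  set (A := h a) in *. set (G := lsum h l) in *. set (F := lsum (fun i => (h i)^2) l) in *. nra.
Qed.

Definition sumI (g : 'I_n -> R) : R := lsum g idx.

Lemma lsum_scal (g : 'I_n -> R) c l : lsum (fun i => c * g i) l = c * lsum g l.
Proof. induction l; cbn [lsum]; [ring| rewrite IHl; ring]. Qed.

Lemma sumI_scal (g : 'I_n -> R) c : sumI (fun i => c * g i) = c * sumI g.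
Proof. apply lsum_scal. Qed.

Lemma sumI_ge (g : 'I_n -> R) i : (forall j, 0 <= g j) -> g i <= sumI g.
Proof. intros Hg. apply lsum_ge; auto. apply In_idx. Qed.

Lemma sumI_nonneg (g : 'I_n -> R) : (forall j, 0 <= g j) -> 0 <= sumI g.
Proof. intros; apply lsum_nonneg; auto. Qed.

Lemma dist_coord x y i : Rabs (x i - y i) <= dist x y.
Proof.
  unfold dist. rewrite <- sqrt_Rsqr_abs. apply sqrt_le_1_alt.
  rewrite Rsqr_pow2 (fold_lsum (fun j => (x j - y j)^2)). apply (lsum_ge (fun j => (x j - y j)^2)).
  - intros; apply pow2_ge_0.
  - apply In_idx.
Qed.

Lemma dist_le_sum x y : dist x y <= sumI (fun i => Rabs (x i - y i)).
Proof.
  unfold dist, sumI. rewrite (fold_lsum (fun j => (x j - y j)^2)).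
  assert (H3 : 0 <= lsum (fun i => Rabs (x i - y i)) idx).
  { apply lsum_nonneg. intros; apply Rabs_pos. }
  rewrite <- (sqrt_pow2 _ H3). apply sqrt_le_1_alt.
  rewrite (lsum_ext (fun j => (x j - y j)^2) (fun j => (Rabs (x j - y j))^2)).
  - apply (lsum_sq (fun i => Rabs (x i - y i))). intros; apply Rabs_pos.
  - intros; rewrite pow2_abs; reflexivity.
Qed.

End Poly.
Section Eval.
Variable n : nat.
Implicit Types (z w : 'I_n -> Complex.C) (x y e : 'I_n -> R).

Fixpoint mprod (a : 'I_n -> nat) z (c : Complex.C) (l : list 'I_n) : Complex.C :=
  match l with nil => c | i :: l' => (z i ^ a i * mprod a z c l')%C end.
Fixpoint ndeg (a : 'I_n -> nat) (l : list 'I_n) : nat :=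
  match l with nil => O | i :: l' => (a i + ndeg a l')%nat end.
Fixpoint psum (g : rpoly n) (z : 'I_n -> Complex.C) : Complex.C :=
  match g with nil => Complex.RtoC 0 | m :: g' => (mprod (snd m) z (Complex.RtoC (fst m)) (idx n) + psum g' z)%C end.

Lemma mon_eval_E (m : monomial n) z : mon_eval m z = mprod (snd m) z (Complex.RtoC (fst m)) (idx n).
Proof.
  unfold mon_eval. change (enum 'I_n) with (idx n). induction (idx n); [reflexivity|].
  cbn [List.fold_right mprod]. rewrite Cmul_E Cpow_E IHl. reflexivity.
Qed.

Lemma peval_E (g : rpoly n) z : peval g z = psum g z.
Proof.
  unfold peval. induction g; [reflexivity|].
  cbn [List.fold_right psum]. rewrite Cadd_E mon_eval_E IHg. reflexivity.
Qed.

Lemma mdeg_E (a : 'I_n -> nat) : mdeg a = ndeg a (idx n).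
Proof. unfold mdeg. change (enum 'I_n) with (idx n). induction (idx n); [reflexivity|].
  cbn [List.fold_right ndeg]. rewrite IHl. reflexivity. Qed.

Lemma mprod_c0 a z l : mprod a z (Complex.RtoC 0) l = Complex.RtoC 0.
Proof. induction l; cbn [mprod]; [reflexivity| rewrite IHl; cring]. Qed.

Lemma mprod_scale a z c (lam : C) l :
  mprod a (fun i => lam * z i)%C c l = (lam ^ (ndeg a l) * mprod a z c l)%C.
Proof.
  induction l; cbn [mprod ndeg]; [cring|].
  rewrite IHl Cpow_mult_l Cpow_add_r. cring.
Qed.

Lemma mprod_ext a z w c l : (forall i, z i = w i) -> mprod a z c l = mprod a w c l.
Proof. intros H; induction l; cbn [mprod]; [reflexivity| rewrite H IHl; reflexivity]. Qed.

Lemma psum_ext (g : rpoly n) z w : (forall i, z i = w i) -> psum g z = psum g w.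
Proof. intros H; induction g; cbn [psum]; [reflexivity| rewrite (mprod_ext _ z w) // IHg; reflexivity]. Qed.

Lemma peval_ext (g : rpoly n) z w : (forall i, z i = w i) -> peval g z = peval g w.
Proof. rewrite !peval_E. apply psum_ext. Qed.

Lemma psum_hom (g : rpoly n) d z (lam : C) :
  (forall m, List.In m g -> fst m <> 0 -> mdeg (snd m) = d) ->
  psum g (fun i => lam * z i)%C = (lam ^ d * psum g z)%C.
Proof.
  intros Hd; induction g as [|m g IH]; cbn [psum]; [cring|].
  rewrite IH; [|intros; apply Hd; [right|]; auto].
  rewrite mprod_scale. destruct (Req_dec (fst m) 0) as [E|E].
  - rewrite E mprod_c0. cring.
  - rewrite <- mdeg_E, (Hd m); [cring| left; reflexivity| exact E].
Qed.

Lemma Cpow_RtoC (a : R) k : ((Complex.RtoC a) ^ k)%C = Complex.RtoC (a ^ k).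
Proof. rewrite RtoC_pow. reflexivity. Qed.

End Eval.
Lemma Cmod_sub_le (a b : Complex.C) : Cmod (a - b)%C <= Cmod a + Cmod b.
Proof. unfold Cminus. eapply Rle_trans; [apply Cmod_triangle|]. rewrite Cmod_opp. lra. Qed.

Lemma Cmod_sub_ge (a b : Complex.C) : Cmod a - Cmod b <= Cmod (a - b)%C.
Proof.
  pose proof (Cmod_triangle (a - b)%C b).
  replace (a - b + b)%C with a in H by cring. lra.
Qed.

Lemma pow_lip (a b : Complex.C) (M dl : R) k : 1 <= M -> Cmod a <= M -> Cmod b <= M ->
  Cmod (a - b)%C <= dl ->
  M * Cmod (a ^ k - b ^ k)%C <= INR k * dl * M ^ k /\ Cmod (a ^ k)%C <= M ^ k /\ Cmod (b ^ k)%C <= M ^ k.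
Proof.
  intros HM Ha Hb Hab. assert (Hdl : 0 <= dl) by (pose proof (Cmod_ge_0 (a - b)%C); lra).
  induction k as [|k [IH1 [IH2 IH3]]].
  - cbn [Complex.Cpow]. replace (1 - 1)%C with (Complex.RtoC 0) by cring. rewrite Cmod_0 Cmod_1. cbn [INR pow]. repeat split; lra.
  - rewrite !Cpow_S.
    replace (a * a ^ k - b * b ^ k)%C with (a * (a ^ k - b ^ k) + (a - b) * b ^ k)%C by cring.
    rewrite !Cmod_mult. rewrite S_INR. cbn [pow].
    pose proof (Cmod_triangle (a * (a ^ k - b ^ k))%C ((a - b) * b ^ k)%C) as T.
    rewrite !Cmod_mult in T.
    pose proof (Cmod_ge_0 a). pose proof (Cmod_ge_0 b). pose proof (Cmod_ge_0 (a ^ k - b ^ k)%C).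
    pose proof (Cmod_ge_0 (a ^ k)%C). pose proof (Cmod_ge_0 (b ^ k)%C). pose proof (Cmod_ge_0 (a-b)%C).
    assert (0 <= M ^ k) by (apply pow_le; lra).
    set (D := Cmod (a ^ k - b ^ k)%C) in *. set (A := Cmod a) in *. set (B := Cmod b) in *.
    set (Ak := Cmod (a ^ k)%C) in *. set (Bk := Cmod (b ^ k)%C) in *. set (E := Cmod (a - b)%C) in *.
    set (Mk := M ^ k) in *.
    split; [|split].
    + assert (h1 : M * (A * D) <= INR k * dl * (M * Mk)).
      { assert (A * D <= M * D) by (apply Rmult_le_compat_r; lra). nra. }
      assert (h2 : M * (E * Bk) <= dl * (M * Mk)).
      { assert (E * Bk <= dl * Mk) by (apply Rmult_le_compat; lra). nra. }
      assert (M * Cmod (a * (a ^ k - b ^ k) + (a - b) * b ^ k)%C <= M * (A * D + E * Bk)).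
      { apply Rmult_le_compat_l; lra. }
      nra.
    + apply Rmult_le_compat; lra.
    + apply Rmult_le_compat; lra.
Qed.

Section Lip.
Variable n : nat.

Fixpoint coefsum (g : rpoly n) : R :=
  match g with nil => 0 | m :: g' => Rabs (fst m) + coefsum g' end.

Lemma coefsum_nonneg g : 0 <= coefsum g.
Proof. induction g; cbn [coefsum]; [lra|]. pose proof (Rabs_pos (fst a)); lra. Qed.

Variables (z w : 'I_n -> Complex.C) (M dl : R).
Hypotheses (HM : 1 <= M) (Hdl : 0 <= dl) (Hz : forall i, Cmod (z i) <= M) (Hw : forall i, Cmod (w i) <= M)
  (Hzw : forall i, Cmod (z i - w i)%C <= dl).

Lemma mprod_lip a (c : Complex.C) l :
  M * Cmod (mprod n a z c l - mprod n a w c l)%C <= Cmod c * INR (ndeg n a l) * dl * M ^ (ndeg n a l)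
  /\ Cmod (mprod n a z c l) <= Cmod c * M ^ (ndeg n a l)
  /\ Cmod (mprod n a w c l) <= Cmod c * M ^ (ndeg n a l).
Proof.
  induction l as [|i l [IH1 [IH2 IH3]]]; cbn [mprod ndeg].
  - replace (c - c)%C with (Complex.RtoC 0) by cring. rewrite Cmod_0. simpl. pose proof (Cmod_ge_0 c). lra.
  - destruct (pow_lip (z i) (w i) M dl (a i) HM (Hz i) (Hw i) (Hzw i)) as [P1 [P2 P3]].
    set (u := mprod n a z c l) in *. set (v := mprod n a w c l) in *.
    replace (z i ^ a i * u - w i ^ a i * v)%C with (z i ^ a i * (u - v) + (z i ^ a i - w i ^ a i) * v)%C by cring.
    pose proof (Cmod_triangle (z i ^ a i * (u - v))%C ((z i ^ a i - w i ^ a i) * v)%C) as T.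
    rewrite !Cmod_mult in T |- *. rewrite plus_INR pow_add.
    pose proof (Cmod_ge_0 (u - v)%C). pose proof (Cmod_ge_0 (z i ^ a i)%C). pose proof (Cmod_ge_0 (w i ^ a i)%C).
    pose proof (Cmod_ge_0 (z i ^ a i - w i ^ a i)%C). pose proof (Cmod_ge_0 u). pose proof (Cmod_ge_0 v).
    pose proof (Cmod_ge_0 c).
    assert (0 <= M ^ a i) by (apply pow_le; lra). assert (0 <= M ^ ndeg n a l) by (apply pow_le; lra).
    set (Zk := Cmod (z i ^ a i)%C) in *. set (Wk := Cmod (w i ^ a i)%C) in *.
    set (Dk := Cmod (z i ^ a i - w i ^ a i)%C) in *. set (D := Cmod (u - v)%C) in *.
    set (U := Cmod u) in *. set (V := Cmod v) in *. set (Ma := M ^ a i) in *. set (Ml := M ^ ndeg n a l) in *.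
    set (K := ndeg n a l) in *. set (cc := Cmod c) in *.
    pose proof (pos_INR (a i)). pose proof (pos_INR K).
    split; [|split].
    + assert (h1 : M * (Zk * D) <= Ma * (cc * INR K * dl * Ml)).
      { replace (M * (Zk * D)) with (Zk * (M * D)) by ring. apply Rmult_le_compat; try lra.
        apply Rmult_le_pos; lra. }
      assert (h2 : M * (Dk * V) <= (INR (a i) * dl * Ma) * (cc * Ml)).
      { replace (M * (Dk * V)) with ((M * Dk) * V) by ring. apply Rmult_le_compat; try lra.
        apply Rmult_le_pos; lra. }
      assert (M * Cmod (z i ^ a i * (u - v) + (z i ^ a i - w i ^ a i) * v)%C <= M * (Zk * D + Dk * V)).
      { apply Rmult_le_compat_l; lra. }
      nra.
    + replace (cc * (Ma * Ml)) with (Ma * (cc * Ml)) by ring. apply Rmult_le_compat; lra.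
    + replace (cc * (Ma * Ml)) with (Ma * (cc * Ml)) by ring. apply Rmult_le_compat; lra.
Qed.

Lemma psum_lip (g : rpoly n) d :
  (forall m, List.In m g -> fst m <> 0 -> mdeg (snd m) = d) ->
  M * Cmod (psum n g z - psum n g w)%C <= coefsum g * INR d * dl * M ^ d.
Proof.
  intros Hd.
  induction g as [|m g IH]; cbn [psum coefsum].
  - replace (Complex.RtoC 0 - Complex.RtoC 0)%C with (Complex.RtoC 0) by cring. rewrite Cmod_0.
    pose proof (pos_INR d). assert (0 <= M ^ d) by (apply pow_le; lra). nra.
  - assert (IH' : M * Cmod (psum n g z - psum n g w)%C <= coefsum g * INR d * dl * M ^ d).
    { apply IH. intros; apply Hd; [right|]; auto. }
    set (u := mprod n (snd m) z (Complex.RtoC (fst m)) (idx n)) in *.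
    set (v := mprod n (snd m) w (Complex.RtoC (fst m)) (idx n)) in *.
    assert (Hm : M * Cmod (u - v)%C <= Rabs (fst m) * INR d * dl * M ^ d).
    { destruct (Req_dec (fst m) 0) as [E|E].
      - unfold u, v. rewrite E !mprod_c0. replace (Complex.RtoC 0 - Complex.RtoC 0)%C with (Complex.RtoC 0) by cring.
        rewrite Cmod_0 Rabs_R0. lra.
      - rewrite <- (Hd m (List.in_eq m g) E), mdeg_E, <- Cmod_R.
        apply mprod_lip. }
    replace (u + psum n g z - (v + psum n g w))%C with ((u - v) + (psum n g z - psum n g w))%C by cring.
    pose proof (Cmod_triangle (u - v)%C (psum n g z - psum n g w)%C).
    assert (M * Cmod ((u - v) + (psum n g z - psum n g w))%C <= M * (Cmod (u - v)%C + Cmod (psum n g z - psum n g w)%C)).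
    { apply Rmult_le_compat_l; lra. }
    lra.
Qed.

Lemma psum_bound (g : rpoly n) d :
  (forall m, List.In m g -> fst m <> 0 -> mdeg (snd m) = d) ->
  Cmod (psum n g z) <= coefsum g * M ^ d.
Proof.
  intros Hd.
  induction g as [|m g IH]; cbn [psum coefsum].
  - rewrite Cmod_0. assert (0 <= M ^ d) by (apply pow_le; lra). nra.
  - assert (IH' : Cmod (psum n g z) <= coefsum g * M ^ d).
    { apply IH. intros; apply Hd; [right|]; auto. }
    set (u := mprod n (snd m) z (Complex.RtoC (fst m)) (idx n)) in *.
    assert (Hm : Cmod u <= Rabs (fst m) * M ^ d).
    { destruct (Req_dec (fst m) 0) as [E|E].
      - unfold u. rewrite E !mprod_c0. rewrite Cmod_0 Rabs_R0. lra.
      - rewrite <- (Hd m (List.in_eq m g) E), mdeg_E, <- Cmod_R.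
        apply mprod_lip. }
    pose proof (Cmod_triangle u (psum n g z)). lra.
Qed.

End Lip.
Notation RC := Complex.RtoC.

Fixpoint cprod (rs : list Complex.C) (t : Complex.C) : Complex.C :=
  match rs with nil => RC 1 | r :: rs' => ((t - r) * cprod rs' t)%C end.

Lemma cprod_root rs r : List.In r rs -> cprod rs r = RC 0.
Proof.
  induction rs as [|a rs IH]; cbn [List.In cprod]; [tauto|].
  intros [->|H]; [cring| rewrite IH //; cring].
Qed.

Lemma cprod_lower rs t (b : R) : 0 <= b -> (forall r, List.In r rs -> b <= Cmod (t - r)%C) ->
  b ^ (length rs) <= Cmod (cprod rs t).
Proof.
  intros Hb; induction rs as [|a rs IH]; intros H; cbn [length cprod pow].
  - rewrite Cmod_1; lra.
  - rewrite Cmod_mult. apply Rmult_le_compat; [lra| apply pow_le; lra| |].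
    + apply H; left; reflexivity.
    + apply IH; intros; apply H; right; auto.
Qed.

Lemma im_le_Cmod (z : Complex.C) : Rabs (Im z) <= Cmod z.
Proof. pose proof (Rmax_Cmod z). unfold Im. pose proof (Rmax_r (Rabs (fst z)) (Rabs (snd z))). lra. Qed.

Lemma re_le_Cmod' (z : Complex.C) : Rabs (Re z) <= Cmod z.
Proof. apply re_le_Cmod. Qed.

Lemma Cmult_integral' (a b : Complex.C) : (a * b)%C = RC 0 -> b <> RC 0 -> a = RC 0.
Proof.
  intros H Hb. destruct (classic (a = RC 0)) as [|Ha]; auto.
  exfalso. apply (Cmod_gt_0 a) in Ha. apply (Cmod_gt_0 b) in Hb.
  assert (Cmod (a * b)%C = 0) by (rewrite H; apply Cmod_0). rewrite Cmod_mult in H0. nra.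
Qed.

Lemma Cmult_integral2 (a b : Complex.C) : (a * b)%C = RC 0 -> a <> RC 0 -> b = RC 0.
Proof. intros H Ha. apply (Cmult_integral' b a); auto. rewrite <- H. cring. Qed.

Lemma RC_inj (a b : R) : RC a = RC b -> a = b.
Proof. intros H. apply (f_equal fst) in H. exact H. Qed.

Lemma conn01_aux (Q : R -> Prop) :
  (forall u, 0 <= u <= 1 -> exists dl, 0 < dl /\ forall u', 0 <= u' <= 1 -> Rabs (u' - u) < dl -> (Q u' <-> Q u)) ->
  Q 0 -> Q 1.
Proof.
  intros Hloc HQ0.
  set (E := fun u => 0 <= u <= 1 /\ forall v, 0 <= v <= u -> Q v).
  assert (Hb : bound E) by (exists 1; intros u [Hu _]; lra).
  assert (HE0 : E 0) by (split; [lra| intros v Hv; replace v with 0 by lra; auto]).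
  destruct (completeness E Hb (ex_intro _ 0 HE0)) as [s [Hs1 Hs2]].
  assert (Hs0 : 0 <= s) by (apply Hs1; exact HE0).
  assert (Hs1' : s <= 1) by (apply Hs2; intros u [Hu _]; lra).
  destruct (Hloc s (conj Hs0 Hs1')) as [dl [Hdl Hs]].
  assert (Hu : exists u, E u /\ s - dl < u).
  { apply NNPP; intros Hn.
    assert (s <= s - dl); [|lra].
    apply Hs2. intros u Eu. apply Rnot_lt_le. intros Hlt. apply Hn. exists u; split; auto. }
  destruct Hu as [u [[Hu01 HuQ] Hu]].
  assert (Hus : u <= s) by (apply Hs1; split; auto).
  assert (HQs : Q s).
  { apply (Hs u); [lra| rewrite Rabs_left1; lra| apply HuQ; lra]. }
  assert (HE' : E (Rmin 1 (s + dl / 2))).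
  { split; [split; [apply Rmin_glb; lra| apply Rmin_l]|].
    intros v Hv. destruct (Rle_dec v u) as [Hvu|Hvu]; [apply HuQ; lra|].
    pose proof (Rmin_l 1 (s + dl/2)). pose proof (Rmin_r 1 (s + dl/2)).
    apply (Hs v); [lra| |exact HQs]. apply Rabs_def1; lra. }
  pose proof (Hs1 _ HE') as Hle.
  assert (s = 1).
  { destruct (Rle_dec 1 (s + dl/2)).
    - rewrite Rmin_left in Hle; lra.
    - rewrite Rmin_right in Hle; lra. }
  subst s; exact HQs.
Qed.

Lemma conn01 (P : R -> Prop) :
  (forall u, 0 <= u <= 1 -> exists dl, 0 < dl /\ forall u', 0 <= u' <= 1 -> Rabs (u' - u) < dl -> (P u' <-> P u)) ->
  (P 0 <-> P 1).
Proof.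
  intros Hloc. split; [apply conn01_aux; auto|].
  intros H1. apply NNPP; intros H0.
  assert (~ P 1); [|tauto].
  apply (conn01_aux (fun u => ~ P u)); auto.
  intros u Hu. destruct (Hloc u Hu) as [dl [Hdl H]]. exists dl; split; auto.
  intros u' Hu' Hd. specialize (H u' Hu' Hd). tauto.
Qed.

Fixpoint lmin (g : Complex.C -> R) (rs : list Complex.C) : R :=
  match rs with nil => 1 | r :: rs' => Rmin (g r) (lmin g rs') end.

Lemma lmin_spec g rs : (forall r, List.In r rs -> 0 < g r) ->
  0 < lmin g rs /\ lmin g rs <= 1 /\ forall r, List.In r rs -> lmin g rs <= g r.
Proof.
  induction rs as [|a rs IH]; intros H; cbn [lmin List.In].
  - split; [lra| split; [lra| tauto]].
  - destruct IH as [I1 [I2 I3]]; [intros; apply H; right; auto|].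
    assert (0 < g a) by (apply H; left; auto).
    split; [apply Rmin_glb_lt; auto|]. split; [pose proof (Rmin_r (g a) (lmin g rs)); lra|].
    intros r [<-|Hr]; [apply Rmin_l|]. pose proof (Rmin_r (g r) (lmin g rs)).
    pose proof (Rmin_r (g a) (lmin g rs)). specialize (I3 r Hr). lra.
Qed.

Fixpoint lsumC (rs : list Complex.C) : R :=
  match rs with nil => 0 | r :: rs' => Cmod r + lsumC rs' end.

Lemma lsumC_spec rs : 0 <= lsumC rs /\ forall r, List.In r rs -> Cmod r <= lsumC rs.
Proof.
  induction rs as [|a rs [I1 I2]]; cbn [lsumC List.In].
  - split; [lra| tauto].
  - pose proof (Cmod_ge_0 a). split; [lra|]. intros r [<-|Hr]; [lra| specialize (I2 r Hr); lra].
Qed.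
Section Main.
Variables (n : nat) (f : rpoly n) (d : nat).
Hypothesis Hd : forall m, List.In m f -> fst m <> 0 -> mdeg (snd m) = d.
Hypothesis FACT : forall (z : 'I_n -> Complex.C) (v : 'I_n -> R),
  psum n f (fun i => RC (v i)) <> RC 0 ->
  exists rs, length rs = d /\ forall t, psum n f (fun i => Cplus (z i) (Cmult t (RC (v i)))) =
     Cmult (psum n f (fun i => RC (v i))) (cprod rs t).

Local Notation F := (psum n f).
Definition Rv (x : 'I_n -> R) : 'I_n -> Complex.C := fun i => RC (x i).
Definition pt (z : 'I_n -> Complex.C) (v : 'I_n -> R) (t : Complex.C) : 'I_n -> Complex.C :=
  fun i => Cplus (z i) (Cmult t (RC (v i))).
Definition Cone (e x : 'I_n -> R) : Prop := forall t : R, F (pt (Rv x) e (RC t)) = RC 0 -> t < 0.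
Definition Hyp (e : 'I_n -> R) : Prop :=
  F (Rv e) <> RC 0 /\ forall x t, F (pt (Rv x) e t) = RC 0 -> Im t = 0.
Definition Ip (y : 'I_n -> R) : Prop := exists z, F z = RC 0 /\ forall i, Im (z i) = y i.

Lemma hyp_E e : hyperbolic f e <-> Hyp e.
Proof.
  unfold hyperbolic, Hyp. split; intros [H1 H2]; split.
  - intros H; apply H1. rewrite peval_E. exact H.
  - intros x t H. apply (H2 x t). rewrite peval_E. exact H.
  - intros H; apply H1. rewrite peval_E in H. exact H.
  - intros x t H. apply (H2 x t). rewrite peval_E in H. exact H.
Qed.

Lemma cone_E e x : hyp_cone f e x <-> Cone e x.
Proof.
  unfold hyp_cone, Cone. split; intros H t Ht; apply H.
  - rewrite peval_E. exact Ht.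
  - rewrite peval_E in Ht. exact Ht.
Qed.

Lemma ip_E y : imag_proj f y <-> Ip y.
Proof.
  unfold imag_proj, Ip, zero_set. split; intros [z [H1 H2]]; exists z; split; auto.
  - rewrite peval_E in H1. exact H1.
  - rewrite peval_E. exact H1.
Qed.

Lemma F_ext z w : (forall i, z i = w i) -> F z = F w.
Proof. apply psum_ext. Qed.

Lemma F_hom (lam : Complex.C) z : F (fun i => Cmult lam (z i)) = Cmult (Cpow lam d) (F z).
Proof. apply psum_hom. exact Hd. Qed.

Lemma F_lip z w M dl : 1 <= M -> 0 <= dl -> (forall i, Cmod (z i) <= M) -> (forall i, Cmod (w i) <= M) ->
  (forall i, Cmod (z i - w i)%C <= dl) -> Cmod (F z - F w)%C <= coefsum n f * INR d * dl * M ^ d.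
Proof.
  intros HM Hdl Hz Hw Hzw.
  assert (M * Cmod (F z - F w)%C <= coefsum n f * INR d * dl * M ^ d) by (eapply psum_lip; eauto).
  pose proof (Cmod_ge_0 (F z - F w)%C). nra.
Qed.

Ltac pteq := intros ?i; unfold pt, Rv; apply injective_projections; simpl; field.

Lemma F1a e : Hyp e -> ~ Ip e.
Proof.
  intros [H0 H1] [z [Hz Him]].
  specialize (H1 (fun i => Re (z i)) Ci).
  assert (Im Ci = 0); [|unfold Im, Ci in *; simpl in *; lra].
  apply H1. rewrite <- Hz. apply F_ext. intros i. unfold pt, Rv. rewrite <- (Him i).
  destruct (z i) as [a b]. unfold Ci. apply injective_projections; simpl; ring.
Qed.

Lemma F1b e : ~ Ip e -> Hyp e.
Proof.
  intros HI. split.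
  - intros H. apply HI. exists (fun i => Cmult Ci (RC (e i))). split.
    + rewrite F_hom. change (fun i => RC (e i)) with (Rv e). rewrite H. cring.
    + intros i. unfold Ci, Im; simpl; ring.
  - intros x t Ht. apply NNPP; intros Hb. apply HI.
    exists (fun i => Cmult (RC (/ Im t)) (pt (Rv x) e t i)). split.
    + rewrite F_hom Ht. cring.
    + intros i. destruct t as [a b]. unfold Im, pt, Rv in *; simpl in *. field. exact Hb.
Qed.

Lemma hyp_nz e : Hyp e -> F (Rv e) <> RC 0.
Proof. intros [H _]; exact H. Qed.

Lemma Cpow_RC_nz (a : R) k : a <> 0 -> Cpow (RC a) k <> RC 0.
Proof. intros H. apply Cpow_nz. intros E. apply H. apply RC_inj. exact E. Qed.

Lemma cone_e e : F (Rv e) <> RC 0 -> Cone e e.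
Proof.
  intros He t Ht. apply NNPP; intros Hn.
  assert (E : F (pt (Rv e) e (RC t)) = Cmult (Cpow (RC (1 + t)) d) (F (Rv e))).
  { rewrite <- F_hom. apply F_ext. pteq. }
  rewrite E in Ht. apply Cmult_integral' in Ht; auto.
  revert Ht. apply Cpow_RC_nz. lra.
Qed.

Lemma cone_nz e x : Cone e x -> F (Rv x) <> RC 0.
Proof.
  intros H E. assert (0 < 0); [|lra]. apply H. transitivity (F (Rv x)); [apply F_ext; pteq| exact E].
Qed.

Lemma cone_ext e x y : (forall i, x i = y i) -> Cone e x -> Cone e y.
Proof.
  intros H Hx t Ht. apply Hx. rewrite <- Ht. apply F_ext. intros i. unfold pt, Rv. rewrite H. reflexivity.
Qed.

Definition seg (x y : 'I_n -> R) (u : R) : 'I_n -> R := fun i => (1 - u) * x i + u * y i.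

Lemma cone_star e x u : F (Rv e) <> RC 0 -> Cone e x -> 0 <= u <= 1 -> Cone e (seg x e u).
Proof.
  intros He Hx Hu. destruct (Req_dec u 1) as [->|Hu1].
  - apply (cone_ext e e); [intros i; unfold seg; ring| apply cone_e; auto].
  - intros t Ht.
    assert (E : F (pt (Rv (seg x e u)) e (RC t)) =
       Cmult (Cpow (RC (1 - u)) d) (F (pt (Rv x) e (RC ((u + t) / (1 - u)))))).
    { rewrite <- F_hom. apply F_ext. intros i. unfold pt, Rv, seg. apply injective_projections;
        simpl; field; lra. }
    rewrite E in Ht. apply Cmult_integral2 in Ht; [|apply Cpow_RC_nz; lra].
    + apply Hx in Ht. assert (0 < 1 - u) by lra.
      apply (Rmult_lt_compat_r (1 - u)) in Ht; auto. field_simplify in Ht; lra.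
Qed.


Lemma pt_real x e (t : R) i : pt (Rv x) e (RC t) i = RC (x i + t * e i).
Proof. unfold pt, Rv. apply injective_projections; simpl; ring. Qed.

Lemma Cmod_pt_real x e (t : R) i : Cmod (pt (Rv x) e (RC t) i) = Rabs (x i + t * e i).
Proof. rewrite pt_real Cmod_R. reflexivity. Qed.

Lemma root_of_fact (z : 'I_n -> Complex.C) v rs r :
  (forall t, F (pt z v t) = Cmult (F (Rv v)) (cprod rs t)) -> List.In r rs -> F (pt z v r) = RC 0.
Proof. intros H Hr. rewrite H cprod_root //. cring. Qed.

Lemma real_eq (r : Complex.C) : Im r = 0 -> r = RC (Re r).
Proof. destruct r as [a b]. unfold Im, Re; simpl. intros ->. reflexivity. Qed.

Lemma sum_abs_bound (x : 'I_n -> R) i : Rabs (x i) <= sumI n (fun j => Rabs (x j)).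
Proof. apply (sumI_ge n (fun j => Rabs (x j))). intros; apply Rabs_pos. Qed.

Lemma sum_abs_nonneg (x : 'I_n -> R) : 0 <= sumI n (fun j => Rabs (x j)).
Proof. apply sumI_nonneg. intros; apply Rabs_pos. Qed.

Lemma coefsum_nn : 0 <= coefsum n f.
Proof. apply coefsum_nonneg. Qed.

Lemma cone_open e : Hyp e -> is_open (Cone e).
Proof.
  intros He x Hx.
  destruct (FACT (Rv x) e (hyp_nz e He)) as [rs [Hlen Hfac]].
  change (forall t, F (pt (Rv x) e t) = Cmult (F (Rv e)) (cprod rs t)) in Hfac.
  set (c := F (Rv e)) in *.
  assert (Hroots : forall r, List.In r rs -> 0 < - Re r).
  { intros r Hr. pose proof (root_of_fact _ _ _ _ Hfac Hr) as H0.
    assert (Him : Im r = 0) by (apply (proj2 He) with x; exact H0).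
    rewrite (real_eq r Him) in H0. apply Hx in H0. lra. }
  destruct (lmin_spec (fun r => - Re r) rs Hroots) as [Hmu0 [Hmu1 Hmu]].
  set (mu := lmin (fun r => - Re r) rs) in *.
  assert (Hc : 0 < Cmod c) by (apply Cmod_gt_0; apply hyp_nz; auto).
  set (A := sumI n (fun j => Rabs (x j))). set (B := sumI n (fun j => Rabs (e j))).
  pose proof (sum_abs_nonneg x) as HA. pose proof (sum_abs_nonneg e) as HB. fold A B in HA, HB.
  set (Q := A + B + 2). set (K := coefsum n f * INR d * Q ^ d).
  assert (HK : 0 <= K).
  { unfold K. pose proof coefsum_nn. pose proof (pos_INR d). assert (0 <= Q ^ d) by (apply pow_le; unfold Q; lra).
    apply Rmult_le_pos; [apply Rmult_le_pos|]; auto. }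
  set (low := Cmod c * mu ^ d).
  assert (Hlow : 0 < low) by (unfold low; apply Rmult_lt_0_compat; auto; apply pow_lt; auto).
  exists (Rmin 1 (low / (K + 1))). split.
  { apply Rmin_glb_lt; [lra|]. apply Rdiv_lt_0_compat; lra. }
  intros x' Hdist.
  set (dl := Rmin 1 (low / (K + 1))) in *.
  assert (Hdl1 : dl <= 1) by apply Rmin_l.
  assert (Hdl2 : dl <= low / (K + 1)) by apply Rmin_r.
  assert (Hdl0 : 0 < dl) by (unfold dl; apply Rmin_glb_lt; [lra| apply Rdiv_lt_0_compat; lra]).
  assert (Hxi : forall i, Rabs (x i - x' i) <= dl).
  { intros i. pose proof (dist_coord n x x' i). lra. }
  assert (Kdl : K * dl < low).
  { apply Rle_lt_trans with (K * (low / (K + 1))); [apply Rmult_le_compat_l; auto|].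
    apply (Rmult_lt_reg_r (K + 1)); [lra|]. field_simplify; [|lra]. nra. }
  intros t Ht. apply Rnot_le_lt. intros Ht0.
  set (z := pt (Rv x) e (RC t)). set (w := pt (Rv x') e (RC t)).
  assert (Hlo : low * (1 + t) ^ d <= Cmod (F z)).
  { unfold z. rewrite Hfac Cmod_mult. unfold low. rewrite Rmult_assoc. apply Rmult_le_compat_l; [lra|].
    rewrite <- Rpow_mult_distr, <- Hlen. apply cprod_lower; [nra|].
    intros r Hr. specialize (Hmu r Hr). simpl in Hmu.
    pose proof (re_le_Cmod (RC t - r)%C) as Hre.
    assert (Re (RC t - r)%C = t - Re r) by (unfold Re; simpl; ring). rewrite H in Hre.
    pose proof (Rle_abs (t - Re r)). nra. }
  set (M := Q * (1 + t)).
  assert (HM : 1 <= M) by (unfold M, Q; nra).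
  assert (Hup : Cmod (F z - F w)%C <= coefsum n f * INR d * dl * M ^ d).
  { apply F_lip; [auto| lra| | |].
    - intros i. unfold z. rewrite Cmod_pt_real. pose proof (sum_abs_bound x i). pose proof (sum_abs_bound e i).
      fold A B in H, H0. pose proof (Rabs_triang (x i) (t * e i)). rewrite Rabs_mult (Rabs_pos_eq t) in H1; [|lra].
      unfold M, Q. pose proof (Rabs_pos (e i)). nra.
    - intros i. unfold w. rewrite Cmod_pt_real. pose proof (sum_abs_bound x i). pose proof (sum_abs_bound e i).
      fold A B in H, H0. pose proof (Rabs_triang (x' i) (t * e i)). rewrite Rabs_mult (Rabs_pos_eq t) in H1; [|lra].
      specialize (Hxi i). assert (Rabs (x' i) <= Rabs (x i) + 1).
      { pose proof (Rabs_triang (x i) (x' i - x i)). replace (x i + (x' i - x i)) with (x' i) in H2 by ring.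
        rewrite Rabs_minus_sym in Hxi. lra. }
      unfold M, Q. pose proof (Rabs_pos (e i)). nra.
    - intros i. unfold z, w. rewrite !pt_real.
      replace (RC (x i + t * e i) - RC (x' i + t * e i))%C with (RC (x i - x' i)) by (apply injective_projections; simpl; ring).
      rewrite Cmod_R. apply Hxi. }
  assert (EM : M ^ d = Q ^ d * (1 + t) ^ d) by (unfold M; apply Rpow_mult_distr).
  rewrite EM in Hup.
  assert (Hw0 : Cmod (F w) = 0) by (unfold w; rewrite Ht; apply Cmod_0).
  pose proof (Cmod_sub_ge (F z) (F w)).
  assert (0 < (1 + t) ^ d) by (apply pow_lt; lra).
  assert (coefsum n f * INR d * dl * (Q ^ d * (1 + t) ^ d) = K * dl * (1 + t) ^ d) by (unfold K; ring).
  nra.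
Qed.


Lemma abs_near (a b dl : R) : Rabs (a - b) <= dl -> Rabs b <= Rabs a + dl.
Proof.
  intros H. pose proof (Rabs_triang a (b - a)). replace (a + (b - a)) with b in H0 by ring.
  rewrite Rabs_minus_sym in H. lra.
Qed.

Lemma Cmod_Rv_diff x x' i : Cmod (Rv x i - Rv x' i)%C = Rabs (x i - x' i).
Proof.
  unfold Rv. replace (RC (x i) - RC (x' i))%C with (RC (x i - x' i)) by (apply injective_projections; simpl; ring).
  apply Cmod_R.
Qed.

Lemma Cmod_pt_diff x x' e (t : R) i : Cmod (pt (Rv x) e (RC t) i - pt (Rv x') e (RC t) i)%C = Rabs (x i - x' i).
Proof.
  rewrite !pt_real.
  replace (RC (x i + t * e i) - RC (x' i + t * e i))%C with (RC (x i - x' i)) by (apply injective_projections; simpl; ring).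
  apply Cmod_R.
Qed.

Lemma pt_bound x e (t M : R) i : 0 <= t -> Rabs (x i) + t * Rabs (e i) <= M -> Cmod (pt (Rv x) e (RC t) i) <= M.
Proof.
  intros Ht H. rewrite Cmod_pt_real. pose proof (Rabs_triang (x i) (t * e i)).
  rewrite Rabs_mult (Rabs_pos_eq t) in H0; lra.
Qed.

Lemma not_cone e x : ~ Cone e x -> exists t0, F (pt (Rv x) e (RC t0)) = RC 0 /\ 0 <= t0.
Proof.
  intros H. apply NNPP; intros Hn. apply H. intros t Ht. apply Rnot_le_lt. intros Ht0.
  apply Hn. exists t; auto.
Qed.

Lemma out_open e x : Hyp e -> F (Rv x) <> RC 0 -> ~ Cone e x ->
  exists eps, 0 < eps /\ forall x', dist x x' < eps -> F (Rv x') <> RC 0 /\ ~ Cone e x'.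
Proof.
  intros He Hfx Hnc.
  destruct (not_cone e x Hnc) as [t0 [Ht0 Ht00]].
  assert (Htp : 0 < t0).
  { destruct (Req_dec t0 0) as [E|E]; [|lra]. exfalso. apply Hfx. rewrite <- Ht0. subst t0.
    apply F_ext. pteq. }
  set (A := sumI n (fun j => Rabs (x j))). set (B := sumI n (fun j => Rabs (e j))).
  pose proof (sum_abs_nonneg x) as HA. pose proof (sum_abs_nonneg e) as HB. fold A B in HA, HB.
  set (M0 := A + t0 * B + 2).
  assert (HM0 : 1 <= M0) by (unfold M0; nra).
  set (K := coefsum n f * INR d * M0 ^ d).
  assert (HK : 0 <= K).
  { unfold K. pose proof coefsum_nn. pose proof (pos_INR d). assert (0 <= M0 ^ d) by (apply pow_le; lra).
    apply Rmult_le_pos; [apply Rmult_le_pos|]; auto. }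
  assert (Hc : 0 < Cmod (F (Rv e))) by (apply Cmod_gt_0; apply hyp_nz; auto).
  set (lowA := Cmod (F (Rv e)) * t0 ^ d).
  assert (HlA : 0 < lowA) by (unfold lowA; apply Rmult_lt_0_compat; auto; apply pow_lt; auto).
  set (lowB := Cmod (F (Rv x))).
  assert (HlB : 0 < lowB) by (unfold lowB; apply Cmod_gt_0; auto).
  set (dl := Rmin 1 (Rmin (lowA / (K + 1)) (lowB / (K + 1)))).
  assert (Hdl0 : 0 < dl).
  { unfold dl. apply Rmin_glb_lt; [lra|]. apply Rmin_glb_lt; apply Rdiv_lt_0_compat; lra. }
  assert (Hdl1 : dl <= 1) by apply Rmin_l.
  assert (HdlA : K * dl < lowA).
  { apply Rle_lt_trans with (K * (lowA / (K + 1))).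
    - apply Rmult_le_compat_l; auto. unfold dl. eapply Rle_trans; [apply Rmin_r| apply Rmin_l].
    - apply (Rmult_lt_reg_r (K + 1)); [lra|]. field_simplify; [|lra]. nra. }
  assert (HdlB : K * dl < lowB).
  { apply Rle_lt_trans with (K * (lowB / (K + 1))).
    - apply Rmult_le_compat_l; auto. unfold dl. eapply Rle_trans; [apply Rmin_r| apply Rmin_r].
    - apply (Rmult_lt_reg_r (K + 1)); [lra|]. field_simplify; [|lra]. nra. }
  exists dl. split; auto. intros x' Hdist.
  assert (Hxi : forall i, Rabs (x i - x' i) <= dl).
  { intros i. pose proof (dist_coord n x x' i). lra. }
  assert (Hxb : forall i, Rabs (x i) <= A) by (intros i; apply sum_abs_bound).
  assert (Heb : forall i, Rabs (e i) <= B) by (intros i; apply sum_abs_bound).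
  assert (Hx'b : forall i, Rabs (x' i) <= A + 1).
  { intros i. pose proof (abs_near _ _ _ (Hxi i)). specialize (Hxb i). lra. }
  split.
  - intros Hfx'.
    assert (Cmod (F (Rv x) - F (Rv x'))%C <= coefsum n f * INR d * dl * M0 ^ d).
    { apply F_lip; [auto| lra| | |].
      - intros i. unfold Rv. rewrite Cmod_R. specialize (Hxb i). unfold M0. nra.
      - intros i. unfold Rv. rewrite Cmod_R. specialize (Hx'b i). unfold M0. nra.
      - intros i. rewrite Cmod_Rv_diff. auto. }
    rewrite Hfx' in H. replace (F (Rv x) - RC 0)%C with (F (Rv x)) in H by cring.
    fold lowB in H. assert (K * dl = coefsum n f * INR d * dl * M0 ^ d) by (unfold K; ring). lra.
  - intros Hc'.
    destruct (FACT (Rv x') e (hyp_nz e He)) as [rs [Hlen Hfac]].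
    change (forall t, F (pt (Rv x') e t) = Cmult (F (Rv e)) (cprod rs t)) in Hfac.
    assert (Hroots : forall r, List.In r rs -> Re r < 0).
    { intros r Hr. pose proof (root_of_fact _ _ _ _ Hfac Hr) as H0.
      assert (Him : Im r = 0) by (apply (proj2 He) with x'; exact H0).
      rewrite (real_eq r Him) in H0. apply Hc' in H0. exact H0. }
    assert (Hlo : lowA <= Cmod (F (pt (Rv x') e (RC t0)))).
    { rewrite Hfac Cmod_mult. unfold lowA. apply Rmult_le_compat_l; [lra|].
      rewrite <- Hlen. apply cprod_lower; [lra|].
      intros r Hr. specialize (Hroots r Hr).
      pose proof (re_le_Cmod (RC t0 - r)%C) as Hre.
      assert (Re (RC t0 - r)%C = t0 - Re r) by (unfold Re; simpl; ring). rewrite H in Hre.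
      pose proof (Rle_abs (t0 - Re r)). lra. }
    assert (Cmod (F (pt (Rv x) e (RC t0)) - F (pt (Rv x') e (RC t0)))%C <= coefsum n f * INR d * dl * M0 ^ d).
    { apply F_lip; [auto| lra| | |].
      - intros i. apply pt_bound; [lra|]. specialize (Hxb i). specialize (Heb i). unfold M0.
        pose proof (Rabs_pos (e i)). nra.
      - intros i. apply pt_bound; [lra|]. specialize (Hx'b i). specialize (Heb i). unfold M0.
        pose proof (Rabs_pos (e i)). nra.
      - intros i. rewrite Cmod_pt_diff. auto. }
    rewrite Ht0 in H. replace (RC 0 - F (pt (Rv x') e (RC t0)))%C with (- F (pt (Rv x') e (RC t0)))%C in H by cring.
    rewrite Cmod_opp in H.
    assert (K * dl = coefsum n f * INR d * dl * M0 ^ d) by (unfold K; ring). lra.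
Qed.


Definition Zc (x e : 'I_n -> R) : 'I_n -> Complex.C := fun i => (x i, e i).

Lemma Cmod_pair_le (a b : R) : Cmod (a, b) <= Rabs a + Rabs b.
Proof.
  unfold Cmod. simpl fst; simpl snd.
  rewrite <- (sqrt_pow2 (Rabs a + Rabs b)); [|pose proof (Rabs_pos a); pose proof (Rabs_pos b); lra].
  apply sqrt_le_1_alt. rewrite <- (pow2_abs a), <- (pow2_abs b).
  pose proof (Rabs_pos a); pose proof (Rabs_pos b). nra.
Qed.

Lemma Cmod_im_lower (t r : Complex.C) : Im t - Im r <= Cmod (t - r)%C.
Proof.
  pose proof (im_le_Cmod (t - r)%C). assert (Im (t - r)%C = Im t - Im r) by (unfold Im; simpl; ring).
  rewrite H0 in H. pose proof (Rle_abs (Im t - Im r)). lra.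
Qed.

Lemma noreal e x v t : Hyp e -> Im t = 0 -> F (pt (Zc x e) v t) <> RC 0.
Proof.
  intros He Ht H. apply (F1a e He). exists (pt (Zc x e) v t). split; auto.
  intros i. destruct t as [a b]. unfold Im in *; simpl in *. subst b. ring.
Qed.

Lemma seg_bound (y e : 'I_n -> R) u i : 0 <= u <= 1 -> Rabs (seg y e u i) <= Rabs (y i) + Rabs (e i).
Proof.
  intros Hu. unfold seg. pose proof (Rabs_triang ((1 - u) * y i) (u * e i)).
  rewrite !Rabs_mult (Rabs_pos_eq (1 - u)) ?(Rabs_pos_eq u) in H; try lra.
  pose proof (Rabs_pos (y i)); pose proof (Rabs_pos (e i)). nra.
Qed.

Lemma seg_diff (y e : 'I_n -> R) u u' i : Rabs (seg y e u i - seg y e u' i) <= Rabs (u - u') * (Rabs (y i) + Rabs (e i)).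
Proof.
  unfold seg. replace ((1 - u) * y i + u * e i - ((1 - u') * y i + u' * e i)) with ((u - u') * (e i - y i)) by ring.
  rewrite Rabs_mult. apply Rmult_le_compat_l; [apply Rabs_pos|].
  unfold Rminus. eapply Rle_trans; [apply Rabs_triang|]. rewrite Rabs_Ropp. lra.
Qed.

Section Gard.
Variables (e y : 'I_n -> R).
Hypotheses (He : Hyp e) (Hy : Cone e y).

Let X x := sumI n (fun j => Rabs (x j)).
Let E := sumI n (fun j => Rabs (e j)).
Let Y := sumI n (fun j => Rabs (y j)).

Lemma w_nz u : 0 <= u <= 1 -> F (Rv (seg y e u)) <> RC 0.
Proof. intros Hu. apply (cone_nz e). apply cone_star; auto. apply hyp_nz; auto. Qed.

Lemma seg_lip x u u' (t : Complex.C) : 0 <= u <= 1 -> 0 <= u' <= 1 ->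
  Cmod (F (pt (Zc x e) (seg y e u) t) - F (pt (Zc x e) (seg y e u') t))%C
    <= coefsum n f * INR d * (E + Y) * (X x + E + Y + 1) ^ d * Rabs (u - u') * (1 + Cmod t) ^ d.
Proof.
  intros Hu Hu'.
  set (Q := X x + E + Y + 1). set (T := Cmod t).
  pose proof (sum_abs_nonneg x) as HX. pose proof (sum_abs_nonneg e) as HE. pose proof (sum_abs_nonneg y) as HY.
  fold (X x) E Y in HX, HE, HY.
  assert (HT : 0 <= T) by apply Cmod_ge_0.
  set (M := Q * (1 + T)). assert (HQ : 1 <= Q) by (unfold Q; lra). assert (HM : 1 <= M) by (unfold M; nra).
  set (dl := (1 + T) * Rabs (u - u') * (E + Y)).
  assert (Hdl : 0 <= dl) by (unfold dl; pose proof (Rabs_pos (u - u')); apply Rmult_le_pos; [nra| lra]).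
  assert (Hb : forall v : 'I_n -> R, (forall i, Rabs (v i) <= Rabs (y i) + Rabs (e i)) ->
     forall i, Cmod (pt (Zc x e) v t i) <= M).
  { intros v Hv i. unfold pt, Zc. eapply Rle_trans; [apply Cmod_triangle|].
    rewrite Cmod_mult Cmod_R. fold T.
    pose proof (Cmod_pair_le (x i) (e i)). pose proof (Hv i).
    pose proof (sum_abs_bound x i). pose proof (sum_abs_bound e i). pose proof (sum_abs_bound y i).
    fold (X x) E Y in H1, H2, H3. pose proof (Rabs_pos (v i)). pose proof (Rabs_pos (e i)). pose proof (Rabs_pos (y i)).
    unfold M, Q. nra. }
  assert (Hl : M * Cmod (F (pt (Zc x e) (seg y e u) t) - F (pt (Zc x e) (seg y e u') t))%C
      <= coefsum n f * INR d * dl * M ^ d).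
  { eapply psum_lip; eauto.
    - apply Hb. intros; apply seg_bound; auto.
    - apply Hb. intros; apply seg_bound; auto.
    - intros i. unfold pt. replace (Zc x e i + t * RC (seg y e u i) - (Zc x e i + t * RC (seg y e u' i)))%C
        with (t * RC (seg y e u i - seg y e u' i))%C by (apply injective_projections; simpl; ring).
      rewrite Cmod_mult Cmod_R. fold T. pose proof (seg_diff y e u u' i).
      pose proof (sum_abs_bound e i). pose proof (sum_abs_bound y i). fold E Y in H0, H1.
      pose proof (Rabs_pos (u - u')). pose proof (Rabs_pos (seg y e u i - seg y e u' i)).
      unfold dl. assert (Rabs (u - u') * (Rabs (y i) + Rabs (e i)) <= Rabs (u - u') * (E + Y)).
      { apply Rmult_le_compat_l; lra. }
      nra. }
  set (D := Cmod (F (pt (Zc x e) (seg y e u) t) - F (pt (Zc x e) (seg y e u') t))%C) in *.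
  assert (HD : 0 <= D) by apply Cmod_ge_0.
  unfold M in Hl. rewrite Rpow_mult_distr in Hl. unfold dl in Hl.
  assert (HT1 : 0 < 1 + T) by lra.
  assert (Q * D <= coefsum n f * INR d * (E + Y) * Q ^ d * Rabs (u - u') * (1 + T) ^ d).
  { apply (Rmult_le_reg_l (1 + T)); auto.
    replace ((1 + T) * (Q * D)) with (Q * (1 + T) * D) by ring. eapply Rle_trans; [exact Hl|]. right; ring. }
  nra.
Qed.

Lemma c_lip u u' : 0 <= u <= 1 -> 0 <= u' <= 1 ->
  Cmod (F (Rv (seg y e u)) - F (Rv (seg y e u')))%C <= coefsum n f * INR d * (E + Y) * (E + Y + 1) ^ d * Rabs (u - u').
Proof.
  intros Hu Hu'.
  pose proof (sum_abs_nonneg e) as HE. pose proof (sum_abs_nonneg y) as HY. fold E Y in HE, HY.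
  eapply Rle_trans.
  - apply F_lip with (M := E + Y + 1) (dl := Rabs (u - u') * (E + Y)); [lra| pose proof (Rabs_pos (u - u')); nra| | |].
    + intros i. unfold Rv. rewrite Cmod_R. pose proof (seg_bound y e u i Hu).
      pose proof (sum_abs_bound e i). pose proof (sum_abs_bound y i). fold E Y in H0, H1. lra.
    + intros i. unfold Rv. rewrite Cmod_R. pose proof (seg_bound y e u' i Hu').
      pose proof (sum_abs_bound e i). pose proof (sum_abs_bound y i). fold E Y in H0, H1. lra.
    + intros i. rewrite Cmod_Rv_diff. eapply Rle_trans; [apply seg_diff|]. apply Rmult_le_compat_l; [apply Rabs_pos|].
      pose proof (sum_abs_bound e i). pose proof (sum_abs_bound y i). fold E Y in H, H0. lra.
  - right; ring.
Qed.


Lemma kappa_bound (mu rho T a : R) : 0 < mu -> 0 <= rho -> 0 <= T -> mu <= a -> T - rho <= a ->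
  mu / (1 + rho + mu) * (1 + T) <= a.
Proof.
  intros Hmu Hrho HT H1 H2.
  assert (mu / (1 + rho + mu) * (1 + T) = mu * (1 + T) / (1 + rho + mu)) by (field; lra).
  rewrite H. assert (H' : mu * (1 + T) <= a * (1 + rho + mu)) by (destruct (Rle_dec T (rho + mu)); nra).
  apply Rmult_le_reg_r with (1 + rho + mu); [lra|].
  replace (mu * (1 + T) / (1 + rho + mu) * (1 + rho + mu)) with (mu * (1 + T)) by (field; lra). exact H'.
Qed.

Lemma G1 x : forall t, 0 <= Im t -> F (pt (Zc x e) y t) <> RC 0.
Proof.
  set (P := fun u => forall t, 0 <= Im t -> F (pt (Zc x e) (seg y e u) t) <> RC 0).
  assert (P1 : P 1).
  { intros t Ht H. assert (Im (t + Ci)%C = 0).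
    { apply (proj2 He) with x. rewrite <- H. apply F_ext. intros i. destruct t as [a b].
      unfold pt, Rv, Zc, seg, Ci. apply injective_projections; simpl; ring. }
    unfold Im, Ci in H0; simpl in H0. unfold Im in Ht. lra. }
  pose proof (sum_abs_nonneg x) as HX. pose proof (sum_abs_nonneg e) as HE. pose proof (sum_abs_nonneg y) as HY.
  fold (X x) E Y in HX, HE, HY.
  set (Kx := coefsum n f * INR d * (E + Y) * (X x + E + Y + 1) ^ d).
  assert (HKx : 0 <= Kx).
  { unfold Kx. pose proof coefsum_nn. pose proof (pos_INR d).
    assert (0 <= (X x + E + Y + 1) ^ d) by (apply pow_le; lra).
    repeat apply Rmult_le_pos; lra. }
  set (Kc := coefsum n f * INR d * (E + Y) * (E + Y + 1) ^ d).
  assert (HKc : 0 <= Kc).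
  { unfold Kc. pose proof coefsum_nn. pose proof (pos_INR d).
    assert (0 <= (E + Y + 1) ^ d) by (apply pow_le; lra).
    repeat apply Rmult_le_pos; lra. }
  assert (Hloc : forall u, 0 <= u <= 1 -> exists dl, 0 < dl /\ forall u', 0 <= u' <= 1 -> Rabs (u' - u) < dl -> (P u' <-> P u)).
  { intros u Hu. destruct (classic (P u)) as [HP|HnP].
    - set (c := F (Rv (seg y e u))).
      assert (Hc : 0 < Cmod c) by (apply Cmod_gt_0; apply w_nz; auto).
      destruct (FACT (Zc x e) (seg y e u) (w_nz u Hu)) as [rs [Hlen Hfac]].
      change (forall t, F (pt (Zc x e) (seg y e u) t) = Cmult c (cprod rs t)) in Hfac.
      assert (Hroots : forall r, List.In r rs -> 0 < - Im r).
      { intros r Hr. pose proof (root_of_fact _ _ _ _ Hfac Hr) as H0.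
        apply Rnot_le_lt. intros Hn. apply (HP r); [lra| exact H0]. }
      destruct (lmin_spec (fun r => - Im r) rs Hroots) as [Hmu0 [Hmu1 Hmu]].
      set (mu := lmin (fun r => - Im r) rs) in *.
      destruct (lsumC_spec rs) as [Hrho0 Hrho].
      set (rho := lsumC rs) in *.
      set (kap := mu / (1 + rho + mu)).
      assert (Hkap : 0 < kap) by (unfold kap; apply Rdiv_lt_0_compat; lra).
      set (low := Cmod c * kap ^ d).
      assert (Hlow : 0 < low) by (unfold low; apply Rmult_lt_0_compat; auto; apply pow_lt; auto).
      exists (low / (Kx + 1)). split; [apply Rdiv_lt_0_compat; lra|].
      intros u' Hu' Hd'. split; intros _; auto.
      intros t Ht H0.
      set (T := Cmod t). assert (HT : 0 <= T) by apply Cmod_ge_0.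
      assert (Hlo : low * (1 + T) ^ d <= Cmod (F (pt (Zc x e) (seg y e u) t))).
      { rewrite Hfac Cmod_mult. unfold low. rewrite Rmult_assoc. apply Rmult_le_compat_l; [lra|].
        rewrite <- Rpow_mult_distr, <- Hlen. apply cprod_lower; [nra|].
        intros r Hr. apply (kappa_bound mu rho T); auto.
        - specialize (Hmu r Hr). simpl in Hmu. pose proof (Cmod_im_lower t r). lra.
        - pose proof (Cmod_sub_ge t r). specialize (Hrho r Hr). fold T in H. lra. }
      pose proof (seg_lip x u u' t Hu Hu') as Hup. fold T Kx in Hup.
      rewrite H0 in Hup. replace (F (pt (Zc x e) (seg y e u) t) - RC 0)%C with (F (pt (Zc x e) (seg y e u) t)) in Hup by cring.
      assert (HTd : 0 < (1 + T) ^ d) by (apply pow_lt; lra).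
      rewrite Rabs_minus_sym in Hd'.
      assert (Kx * Rabs (u - u') < low).
      { apply Rle_lt_trans with (Kx * (low / (Kx + 1))).
        - apply Rmult_le_compat_l; lra.
        - apply (Rmult_lt_reg_r (Kx + 1)); [lra|]. field_simplify; [|lra]. nra. }
      assert (Kx * Rabs (u - u') * (1 + T) ^ d < low * (1 + T) ^ d) by (apply Rmult_lt_compat_r; auto).
      unfold Kx in *. lra.
    - assert (Ht0 : exists t0, 0 <= Im t0 /\ F (pt (Zc x e) (seg y e u) t0) = RC 0).
      { apply NNPP; intros Hn. apply HnP. intros t Ht H0. apply Hn. exists t; auto. }
      destruct Ht0 as [t0 [Ht0 Hz0]].
      assert (Hit0 : 0 < Im t0).
      { destruct (Req_dec (Im t0) 0) as [E0|E0]; [|lra]. exfalso. exact (noreal e x _ _ He E0 Hz0). }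
      set (c := F (Rv (seg y e u))).
      assert (Hc : 0 < Cmod c) by (apply Cmod_gt_0; apply w_nz; auto).
      set (T0 := Cmod t0). assert (HT0 : 0 <= T0) by apply Cmod_ge_0.
      set (lowB := Cmod c / 2 * Im t0 ^ d).
      assert (HlB : 0 < lowB) by (unfold lowB; apply Rmult_lt_0_compat; [lra| apply pow_lt; auto]).
      assert (HT0d : 0 < (1 + T0) ^ d) by (apply pow_lt; lra).
      set (d1 := Cmod c / (2 * (Kc + 1))). set (d2 := lowB / (Kx * (1 + T0) ^ d + 1)).
      assert (Hd1 : 0 < d1) by (unfold d1; apply Rdiv_lt_0_compat; lra).
      assert (Hd2 : 0 < d2).
      { unfold d2; apply Rdiv_lt_0_compat; [lra|]. pose proof (Rmult_le_pos _ _ HKx (Rlt_le _ _ HT0d)). lra. }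
      exists (Rmin d1 d2). split; [apply Rmin_glb_lt; auto|].
      intros u' Hu' Hd'. split; intros HP'; [|contradiction].
      exfalso. rewrite Rabs_minus_sym in Hd'.
      assert (Hdd1 : Rabs (u - u') < d1) by (pose proof (Rmin_l d1 d2); lra).
      assert (Hdd2 : Rabs (u - u') < d2) by (pose proof (Rmin_r d1 d2); lra).
      set (c' := F (Rv (seg y e u'))).
      assert (Hc' : Cmod c / 2 <= Cmod c').
      { pose proof (c_lip u u' Hu Hu'). fold c c' Kc in H. pose proof (Cmod_sub_ge c c').
        pose proof (Cmod_triangle (c - c')%C c'). replace (c - c' + c')%C with c in H1 by cring.
        assert (Kc * Rabs (u - u') <= Cmod c / 2).
        { apply Rle_trans with (Kc * d1); [apply Rmult_le_compat_l; lra|].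
          unfold d1. apply (Rmult_le_reg_r (2 * (Kc + 1))); [lra|]. field_simplify; [|lra]. nra. }
        lra. }
      destruct (FACT (Zc x e) (seg y e u') (w_nz u' Hu')) as [rs [Hlen Hfac]].
      change (forall t, F (pt (Zc x e) (seg y e u') t) = Cmult c' (cprod rs t)) in Hfac.
      assert (Hlo : lowB <= Cmod (F (pt (Zc x e) (seg y e u') t0))).
      { rewrite Hfac Cmod_mult. unfold lowB. apply Rmult_le_compat; [lra| apply pow_le; lra| lra|].
        rewrite <- Hlen. apply cprod_lower; [lra|].
        intros r Hr. pose proof (root_of_fact _ _ _ _ Hfac Hr) as H0.
        assert (Im r < 0).
        { apply Rnot_le_lt. intros Hn. apply (HP' r); auto. }
        pose proof (Cmod_im_lower t0 r). lra. }
      pose proof (seg_lip x u u' t0 Hu Hu') as Hup. fold T0 Kx in Hup.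
      rewrite Hz0 in Hup. replace (RC 0 - F (pt (Zc x e) (seg y e u') t0))%C with (- F (pt (Zc x e) (seg y e u') t0))%C in Hup by cring.
      rewrite Cmod_opp in Hup.
      assert (Kx * Rabs (u - u') * (1 + T0) ^ d < lowB).
      { apply Rle_lt_trans with (Kx * (1 + T0) ^ d * d2).
        - replace (Kx * Rabs (u - u') * (1 + T0) ^ d) with (Kx * (1 + T0) ^ d * Rabs (u - u')) by ring.
          apply Rmult_le_compat_l; [apply Rmult_le_pos; lra| lra].
        - unfold d2. set (W := Kx * (1 + T0) ^ d). assert (0 <= W) by (unfold W; apply Rmult_le_pos; lra).
          apply (Rmult_lt_reg_r (W + 1)); [lra|]. field_simplify; [|lra]. nra. }
      unfold Kx in *. lra. }
  pose proof (conn01 P Hloc) as Hc. apply Hc in P1.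
  intros t Ht H. apply (P1 t Ht). rewrite <- H. apply F_ext. intros i. unfold pt, seg. f_equal. f_equal. f_equal. ring.
Qed.


Lemma Cmult_nz (a b : Complex.C) : a <> RC 0 -> b <> RC 0 -> Cmult a b <> RC 0.
Proof. intros Ha Hb H. apply Hb. apply (Cmult_integral2 a b); auto. Qed.

Lemma G2 x t s : 0 < s -> 0 <= Im t -> F (pt (fun i => (x i, s * e i)) y t) <> RC 0.
Proof.
  intros Hs Ht.
  assert (E1 : F (pt (fun i => (x i, s * e i)) y t) =
     Cmult (Cpow (RC s) d) (F (pt (Zc (fun i => x i / s) e) y (Re t / s, Im t / s)))).
  { rewrite <- F_hom. apply F_ext. intros i. destruct t as [a b]. unfold pt, Zc, Re, Im. simpl.
    apply injective_projections; simpl; field; lra. }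
  rewrite E1. apply Cmult_nz; [apply Cpow_RC_nz; lra|].
  apply G1. unfold Im; simpl. unfold Im in Ht. apply Rmult_le_pos; [lra| left; apply Rinv_0_lt_compat; lra].
Qed.

Lemma Gpos x t0 : 0 < Im t0 -> F (pt (Rv x) y t0) <> RC 0.
Proof.
  intros Hit0 Hz0.
  set (c := F (Rv y)). assert (Hc : 0 < Cmod c) by (apply Cmod_gt_0; apply (cone_nz e); auto).
  set (low := Cmod c * Im t0 ^ d).
  assert (Hlow : 0 < low) by (unfold low; apply Rmult_lt_0_compat; auto; apply pow_lt; auto).
  pose proof (sum_abs_nonneg x) as HX. pose proof (sum_abs_nonneg e) as HE. pose proof (sum_abs_nonneg y) as HY.
  fold (X x) E Y in HX, HE, HY.
  set (T0 := Cmod t0). assert (HT0 : 0 <= T0) by apply Cmod_ge_0.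
  set (M := X x + E + T0 * Y + 1). assert (HM : 1 <= M) by (unfold M; nra).
  set (K := coefsum n f * INR d * E * M ^ d).
  assert (HK : 0 <= K).
  { unfold K. pose proof coefsum_nn. pose proof (pos_INR d). assert (0 <= M ^ d) by (apply pow_le; lra).
    repeat apply Rmult_le_pos; lra. }
  set (s := Rmin 1 (low / (K + 1))).
  assert (Hs0 : 0 < s) by (unfold s; apply Rmin_glb_lt; [lra| apply Rdiv_lt_0_compat; lra]).
  assert (Hs1 : s <= 1) by apply Rmin_l.
  assert (Hs2 : K * s < low).
  { apply Rle_lt_trans with (K * (low / (K + 1))); [apply Rmult_le_compat_l; [lra| apply Rmin_r]|].
    apply (Rmult_lt_reg_r (K + 1)); [lra|]. field_simplify; [|lra]. nra. }
  destruct (FACT (fun i => (x i, (s * e i)%R)) y (cone_nz e y Hy)) as [rs [Hlen Hfac]].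
  change (forall t, F (pt (fun i => (x i, (s * e i)%R)) y t) = Cmult c (cprod rs t)) in Hfac.
  assert (Hlo : low <= Cmod (F (pt (fun i => (x i, (s * e i)%R)) y t0))).
  { rewrite Hfac Cmod_mult. unfold low. apply Rmult_le_compat_l; [lra|].
    rewrite <- Hlen. apply cprod_lower; [lra|].
    intros r Hr. pose proof (root_of_fact _ _ _ _ Hfac Hr) as H0.
    assert (Im r < 0) by (apply Rnot_le_lt; intros Hn; apply (G2 x r s); auto).
    pose proof (Cmod_im_lower t0 r). lra. }
  assert (Hup : Cmod (F (pt (fun i => (x i, (s * e i)%R)) y t0) - F (pt (Rv x) y t0))%C
      <= coefsum n f * INR d * (s * E) * M ^ d).
  { apply F_lip; [lra| nra| | |].
    - intros i. unfold pt. eapply Rle_trans; [apply Cmod_triangle|]. rewrite Cmod_mult Cmod_R. fold T0.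
      pose proof (Cmod_pair_le (x i) (s * e i)). rewrite Rabs_mult (Rabs_pos_eq s) in H; [|lra].
      pose proof (sum_abs_bound x i). pose proof (sum_abs_bound e i). pose proof (sum_abs_bound y i).
      fold (X x) E Y in H0, H1, H2. pose proof (Rabs_pos (e i)). pose proof (Rabs_pos (y i)).
      unfold M. nra.
    - intros i. unfold pt, Rv. eapply Rle_trans; [apply Cmod_triangle|]. rewrite Cmod_mult !Cmod_R. fold T0.
      pose proof (sum_abs_bound x i). pose proof (sum_abs_bound y i).
      fold (X x) Y in H, H0. pose proof (Rabs_pos (y i)). unfold M. nra.
    - intros i. unfold pt, Rv.
      replace ((x i, (s * e i)%R) + t0 * RC (y i) - (RC (x i) + t0 * RC (y i)))%C with ((0, (s * e i)%R) : Complex.C)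
        by (apply injective_projections; simpl; ring).
      eapply Rle_trans; [apply Cmod_pair_le|]. rewrite Rabs_R0 Rabs_mult (Rabs_pos_eq s); [|lra].
      pose proof (sum_abs_bound e i). fold E in H. pose proof (Rabs_pos (e i)). nra. }
  rewrite Hz0 in Hup. replace (F (pt (fun i => (x i, (s * e i)%R)) y t0) - RC 0)%C with (F (pt (fun i => (x i, (s * e i)%R)) y t0)) in Hup by cring.
  assert (coefsum n f * INR d * (s * E) * M ^ d = K * s) by (unfold K; ring). lra.
Qed.

Lemma garding : Hyp y.
Proof.
  split; [apply (cone_nz e); auto|].
  intros x t Ht. apply NNPP; intros Hn.
  destruct (Rlt_dec 0 (Im t)) as [Hp|Hp]; [exact (Gpos x t Hp Ht)|].
  assert (Hneg : 0 < Im (- t)%C) by (destruct t as [a b]; unfold Im in *; simpl in *; lra).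
  apply (Gpos (fun i => - x i) (- t)%C Hneg).
  assert (E1 : F (pt (Rv (fun i => - x i)) y (- t)%C) = Cmult (Cpow (RC (-1)) d) (F (pt (Rv x) y t))).
  { rewrite <- F_hom. apply F_ext. intros i. destruct t as [a b]. unfold pt, Rv.
    apply injective_projections; simpl; ring. }
  rewrite E1 Ht. cring.
Qed.

End Gard.

Lemma seg_dist (x e : 'I_n -> R) u u' :
  dist (seg x e u) (seg x e u') <= Rabs (u - u') * sumI n (fun i => Rabs (e i - x i)).
Proof.
  eapply Rle_trans; [apply dist_le_sum|]. rewrite <- sumI_scal. unfold sumI. right.
  apply lsum_ext. intros i. unfold seg.
  replace ((1 - u) * x i + u * e i - ((1 - u') * x i + u' * e i)) with ((u - u') * (e i - x i)) by ring.
  apply Rabs_mult.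
Qed.

Lemma seg0 (x e : 'I_n -> R) : seg x e 0 = x.
Proof. apply functional_extensionality; intros i; unfold seg; ring. Qed.
Lemma seg1 (x e : 'I_n -> R) : seg x e 1 = e.
Proof. apply functional_extensionality; intros i; unfold seg; ring. Qed.

Lemma cone_connected e : Hyp e -> connected (Cone e).
Proof.
  intros He [U [V [HU [HV [Hcov [[a [Ha HUa]] [[b [Hb HVb]] Hdisj]]]]]]].
  assert (Hfe : F (Rv e) <> RC 0) by (apply hyp_nz; auto).
  assert (Key : forall x, Cone e x -> (U x <-> U e)).
  { intros x Hx.
    pose proof (conn01 (fun u => U (seg x e u))) as Hc. rewrite seg0 seg1 in Hc. apply Hc.
    intros u Hu. pose proof (cone_star e x u Hfe Hx Hu) as Hp.
    set (Sx := sumI n (fun i => Rabs (e i - x i))).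
    assert (HSx : 0 <= Sx) by (apply sumI_nonneg; intros; apply Rabs_pos).
    assert (Hnear : forall eps, 0 < eps -> exists dl, 0 < dl /\ forall u', Rabs (u' - u) < dl ->
              dist (seg x e u) (seg x e u') < eps).
    { intros eps Heps. exists (eps / (Sx + 1)). split; [apply Rdiv_lt_0_compat; lra|].
      intros u' Hu'. eapply Rle_lt_trans; [apply seg_dist|]. rewrite Rabs_minus_sym in Hu'.
      apply Rle_lt_trans with (eps / (Sx + 1) * Sx).
      - apply Rmult_le_compat_r; lra.
      - apply (Rmult_lt_reg_r (Sx + 1)); [lra|]. field_simplify; [|lra]. nra. }
    destruct (Hcov _ Hp) as [HUp|HVp].
    - destruct (HU _ HUp) as [eps [Heps Hball]]. destruct (Hnear eps Heps) as [dl [Hdl Hdl']].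
      exists dl; split; auto. intros u' Hu' Hd'. split; intros _; [auto| apply Hball; apply Hdl'; auto].
    - destruct (HV _ HVp) as [eps [Heps Hball]]. destruct (Hnear eps Heps) as [dl [Hdl Hdl']].
      exists dl; split; auto. intros u' Hu' Hd'.
      assert (HV' : V (seg x e u')) by (apply Hball; apply Hdl'; auto).
      pose proof (cone_star e x u' Hfe Hx Hu') as Hp'.
      split; intros H; exfalso; [exact (Hdisj _ Hp' H HV')| exact (Hdisj _ Hp H HVp)]. }
  apply (Key a Ha) in HUa. apply (Key b Hb) in HUa. exact (Hdisj b Hb HUa HVb).
Qed.

Lemma union_connected (A B : ('I_n -> R) -> Prop) p : connected A -> connected B -> A p -> B p ->
  connected (fun x => A x \/ B x).
Proof.
  intros HA HB Ap Bp [U [V [HU [HV [Hcov [[a [Ha HUa]] [[b [Hb HVb]] Hdisj]]]]]]].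
  unfold connected in HA, HB.
  assert (Sub : forall (W1 W2 : ('I_n -> R) -> Prop), is_open W1 -> is_open W2 ->
     (forall x, A x \/ B x -> W1 x \/ W2 x) -> (forall x, A x \/ B x -> W1 x -> W2 x -> False) ->
     W1 p -> forall x, A x \/ B x -> W1 x).
  { intros W1 W2 H1 H2 Hc Hdj Hp x Hx. apply NNPP; intros Hn.
    assert (Hw2 : W2 x) by (destruct (Hc x Hx); tauto).
    destruct Hx as [Hx|Hx].
    - apply HA. exists W1, W2. split; [exact H1|]. split; [exact H2|].
      split; [intros y Hy; apply Hc; auto|]. split; [exists p; split; auto|].
      split; [exists x; split; auto|]. intros y Hy; apply Hdj; auto.
    - apply HB. exists W1, W2. split; [exact H1|]. split; [exact H2|].
      split; [intros y Hy; apply Hc; auto|]. split; [exists p; split; auto|].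
      split; [exists x; split; auto|]. intros y Hy; apply Hdj; auto. }
  destruct (Hcov p (or_introl Ap)) as [HUp|HVp].
  - apply (Hdisj b Hb); auto. apply (Sub U V); auto.
  - apply (Hdisj a Ha); auto. apply (Sub V U); auto.
    + intros x Hx; destruct (Hcov x Hx); tauto.
    + intros x Hx H1 H2; exact (Hdisj x Hx H2 H1).
Qed.

Lemma cone_max e (K' : ('I_n -> R) -> Prop) : Hyp e -> connected K' -> (forall x, Cone e x -> K' x) ->
  (forall x, K' x -> ~ Ip x) -> forall x, K' x -> Cone e x.
Proof.
  intros He HK Hsub Hni x Hx. apply NNPP; intros Hnc. unfold connected in HK. apply HK.
  exists (Cone e), (fun x => F (Rv x) <> RC 0 /\ ~ Cone e x). repeat split.
  - apply cone_open; auto.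
  - intros z [Hz1 Hz2]. destruct (out_open e z He Hz1 Hz2) as [eps [Heps H]]. exists eps; split; auto.
  - intros z Hz. destruct (classic (Cone e z)) as [|Hn]; [left; auto| right; split; auto].
    apply hyp_nz. apply F1b. apply Hni; auto.
  - exists e. split; [apply Hsub|]; apply cone_e; apply hyp_nz; auto.
  - exists x. split; auto. split; auto. apply hyp_nz. apply F1b. apply Hni; auto.
  - intros z _ H1 [_ H2]. exact (H2 H1).
Qed.

Lemma comp_cone e : Hyp e -> connected_component (fun y => ~ Ip y) (Cone e).
Proof.
  intros He. split; [|split; [|split]].
  - exists e. apply cone_e. apply hyp_nz; auto.
  - intros x Hx. apply F1a. apply (garding e x He Hx).
  - apply cone_connected; auto.
  - intros K' HK Hsub Hni. apply cone_max; auto.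
Qed.

Lemma comp_iff (K : ('I_n -> R) -> Prop) :
  (exists e, Hyp e /\ forall x, K x <-> Cone e x) <-> connected_component (fun y => ~ Ip y) K.
Proof.
  split.
  - intros [e [He HK]].
    assert (E : K = Cone e) by (apply functional_extensionality; intros x; apply propositional_extensionality; auto).
    rewrite E. apply comp_cone; auto.
  - intros [[p Kp] [Ksub [Kconn Kmax]]].
    assert (Hp : Hyp p) by (apply F1b; apply Ksub; auto).
    destruct (comp_cone p Hp) as [_ [Csub [Cconn Cmax]]].
    assert (Cp : Cone p p) by (apply cone_e; apply hyp_nz; auto).
    assert (Uc : connected (fun x => K x \/ Cone p x)) by (apply (union_connected _ _ p); auto).
    assert (Usub : forall x, K x \/ Cone p x -> ~ Ip x) by (intros x [H|H]; [apply Ksub| apply Csub]; auto).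
    exists p. split; auto. intros x. split; intros Hx.
    + apply (Cmax (fun x => K x \/ Cone p x)); auto.
    + apply (Kmax (fun x => K x \/ Cone p x)); auto.
Qed.

End Main.
From mathcomp Require Import all_boot all_algebra.
From mathcomp Require Import Rstruct complex zify.
Import GRing.Theory.

Section Bridge.
Local Open Scope ring_scope.
Notation CR := (Rcomplex Rdefinitions.R).
Definition phi (z : Complex.C) : CR := complex.Complex (fst z) (snd z).
Definition psi (w : CR) : Complex.C := (complex.Re w, complex.Im w).

Lemma phiD (a b : Complex.C) : phi (Cplus a b) = phi a + phi b.
Proof. destruct a, b. reflexivity. Qed.
Lemma phiM (a b : Complex.C) : phi (Cmult a b) = phi a * phi b.
Proof. destruct a, b. reflexivity. Qed.
Lemma phiB (a b : Complex.C) : phi (Cminus a b) = phi a - phi b.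
Proof. destruct a, b. reflexivity. Qed.
Lemma phi0 : phi (RC 0) = 0.
Proof. reflexivity. Qed.
Lemma phi1 : phi (RC 1) = 1.
Proof. reflexivity. Qed.
Lemma phi_psi w : phi (psi w) = w.
Proof. destruct w. reflexivity. Qed.
Lemma phi_inj a b : phi a = phi b -> a = b.
Proof. destruct a, b. unfold phi; simpl. intros H; injection H; intros -> ->; reflexivity. Qed.
Lemma phi_pow (w : Complex.C) (k : nat) : phi (Complex.Cpow w k) = (phi w) ^+ k.
Proof. induction k; [reflexivity|]. rewrite Cpow_S phiM IHk exprS. reflexivity. Qed.

Lemma coef_top (p q : {poly CR}) (m k : nat) : (size p <= m.+1)%N -> (size q <= k.+1)%N ->
  (p * q)`_(m + k) = p`_m * q`_k /\ (size (p * q)%R <= (m + k).+1)%N.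
Proof.
  intros Hp Hq. split.
  - rewrite coefM.
    have Hm : (m < (m + k).+1)%N by rewrite ltnS leq_addr.
    rewrite (bigD1 (Ordinal Hm)) //= big1 ?addr0.
    + by rewrite addKn.
    + move=> j /eqP Hj.
      have : nat_of_ord j != m by apply/eqP => E; apply: Hj; apply: val_inj.
      rewrite neq_ltn => /orP [Hlt|Hgt].
      * rewrite [q`_ _]nth_default ?mulr0 //.
        apply: (leq_trans Hq). have := ltn_ord j. lia.
      * by rewrite [p`_ _]nth_default ?mul0r //; apply: (leq_trans Hp).
  - apply: (leq_trans (size_polyMleq p q)). rewrite -subn1. lia.
Qed.

Variables (n : nat) (z : 'I_n -> Complex.C) (v : 'I_n -> R).

Definition Qlin (i : 'I_n) : {poly CR} := (phi (z i))%:P + (phi (RC (v i)))%:P * 'X.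

Lemma Qlin_size i : (size (Qlin i) <= 2)%N.
Proof.
  unfold Qlin. apply: (leq_trans (size_polyD _ _)). rewrite geq_max. apply/andP; split.
  - apply: (leq_trans (size_polyC_leq1 _)). done.
  - apply: (leq_trans (size_polyMleq _ _)). rewrite size_polyX.
    have := size_polyC_leq1 (phi (RC (v i))). move=> H; rewrite addn2 /=; exact: H.
Qed.

Lemma Qlin_coef i : (Qlin i)`_1 = phi (RC (v i)).
Proof. by rewrite /Qlin coefD coefC /= add0r coefCM coefX /= mulr1. Qed.

Lemma Qlin_exp i k : (size (Qlin i ^+ k) <= k.+1)%N /\ (Qlin i ^+ k)`_k = (phi (RC (v i))) ^+ k.
Proof.
  elim: k => [|k [IH1 IH2]].
  - by rewrite expr0 size_poly1 coefC /= expr0.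
  - rewrite exprS. have [H1 H2] := coef_top (Qlin i) (Qlin i ^+ k) 1 k (Qlin_size i) IH1.
    by rewrite add1n in H1 H2; rewrite H1 IH2 Qlin_coef exprS.
Qed.

Lemma Qlin_horner i t : (Qlin i).[phi t] = phi (Cplus (z i) (Cmult t (RC (v i)))).
Proof. by rewrite /Qlin hornerD hornerC hornerMX hornerC phiD phiM mulrC. Qed.

Fixpoint pprod (a : 'I_n -> nat) (c : Complex.C) (l : list 'I_n) : {poly CR} :=
  match l with nil => (phi c)%:P | i :: l' => Qlin i ^+ a i * pprod a c l' end.

Lemma pprod_horner a c l t :
  (pprod a c l).[phi t] = phi (mprod n a (fun i => Cplus (z i) (Cmult t (RC (v i)))) c l).
Proof.
  elim: l => [|i l IH] /=; first by rewrite hornerC.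
  by rewrite hornerM horner_exp IH Qlin_horner phiM phi_pow.
Qed.

Lemma pprod_top a c l : (size (pprod a c l) <= (ndeg n a l).+1)%N /\
  (pprod a c l)`_(ndeg n a l) = phi (mprod n a (fun i => RC (v i)) c l).
Proof.
  elim: l => [|i l [IH1 IH2]] /=.
  - by rewrite size_polyC_leq1 coefC.
  - have [E1 E2] := Qlin_exp i (a i).
    have [H1 H2] := coef_top _ _ _ _ E1 IH1.
    by rewrite H1 E2 IH2 phiM phi_pow.
Qed.

Lemma pprod_c0 a l : pprod a (RC 0) l = 0.
Proof. elim: l => [|i l IH] /=; [by rewrite phi0| by rewrite IH mulr0]. Qed.

Fixpoint Ppoly (g : rpoly n) : {poly CR} :=
  match g with nil => 0 | m :: g' => pprod (snd m) (RC (fst m)) (idx n) + Ppoly g' end.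

Lemma Ppoly_horner g t : (Ppoly g).[phi t] = phi (psum n g (fun i => Cplus (z i) (Cmult t (RC (v i))))).
Proof.
  elim: g => [|m g IH] /=; first by rewrite horner0 phi0.
  by rewrite hornerD IH pprod_horner phiD.
Qed.

Lemma Ppoly_top g d : (forall m, List.In m g -> fst m <> 0%R -> mdeg (snd m) = d) ->
  (size (Ppoly g) <= d.+1)%N /\ (Ppoly g)`_d = phi (psum n g (fun i => RC (v i))).
Proof.
  elim: g => [|m g IH] Hd /=.
  - by rewrite size_poly0 coef0 phi0.
  - have [IH1 IH2] : (size (Ppoly g) <= d.+1)%N /\ (Ppoly g)`_d = phi (psum n g (fun i => RC (v i))).
    { apply: IH => m' Hm' Hc. apply: Hd => //. by right. }
    have [P1 P2] : (size (pprod m.2 (RC m.1) (idx n)) <= d.+1)%N /\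
      (pprod m.2 (RC m.1) (idx n))`_d = phi (mprod n m.2 (fun i => RC (v i)) (RC m.1) (idx n)).
    { case: (Req_dec m.1 0%R) => [E|E].
      - by rewrite E pprod_c0 mprod_c0 size_poly0 coef0 phi0.
      - rewrite -(Hd m (List.in_eq m g) E) mdeg_E. apply: pprod_top. }
    split.
    + apply: (leq_trans (size_polyD _ _)). by rewrite geq_max P1 IH1.
    + by rewrite coefD P2 IH2 phiD.
Qed.

End Bridge.

Lemma length_size {T} (s : list T) : length s = size s.
Proof. by elim: s => //= a s ->. Qed.

Lemma cprod_phi (rs : seq (Rcomplex Rdefinitions.R)) t :
  phi (cprod (List.map psi rs) t) = (\prod_(r <- rs) (phi t - r))%R.
Proof.
  elim: rs => [|r rs IH] /=; first by rewrite big_nil phi1.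
  by rewrite big_cons phiM phiB phi_psi IH.
Qed.

Lemma fact_psum n (f : rpoly n) d
  (Hd : forall m, List.In m f -> fst m <> 0%R -> mdeg (snd m) = d)
  (z : 'I_n -> Complex.C) (v : 'I_n -> R) :
  psum n f (fun i => RC (v i)) <> RC 0 ->
  exists rs, length rs = d /\ forall t, psum n f (fun i => Cplus (z i) (Cmult t (RC (v i)))) =
     (Cmult (psum n f (fun i => RC (v i))) (cprod rs t)).
Proof.
  intros Hne.
  have [Hs Hc] := Ppoly_top n z v f d Hd.
  set P := Ppoly n z v f in Hs Hc *.
  have Hcd : (P`_d != 0)%R.
  { rewrite Hc. apply/eqP => E. apply: Hne. apply: phi_inj. by rewrite E phi0. }
  have HsP : size P = d.+1.
  { apply/eqP; rewrite eqn_leq Hs /=.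
    case: (leqP (size P) d) => // H. move: Hcd. rewrite nth_default //. by rewrite eqxx. }
  have Hlead : lead_coef P = phi (psum n f (fun i => RC (v i))).
  { by rewrite lead_coefE HsP /= -Hc. }
  have [rs Hrs] := closed_field_poly_normal P.
  have Hsz : size rs = d.
  { have : size P = (size rs).+1.
    { rewrite {1}Hrs size_scale ?size_prod_XsubC //. by rewrite Hlead -Hc. }
    rewrite HsP. by case. }
  exists (List.map psi rs). split.
  - by rewrite length_size size_map Hsz.
  - move=> t. apply: phi_inj. rewrite phiM cprod_phi -Hlead -(Ppoly_horner n z v f t) -/P.
    rewrite {1}Hrs hornerZ horner_prod. congr (_ * _)%R. apply: eq_bigr => r _. by rewrite hornerXsubC.
Qed.

Theorem theorem1p1 (n : nat) (f : rpoly n) (Hf : homogeneous f)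
  (K : ('I_n -> R) -> Prop) :
  (exists e : 'I_n -> R, hyperbolic f e /\ forall x, K x <-> hyp_cone f e x)
  <-> connected_component (fun y => ~ imag_proj f y) K.
Proof.
  destruct Hf as [d Hd].
  pose proof (fact_psum n f d Hd) as FACT.
  assert (E1 : (fun y => ~ imag_proj f y) = (fun y => ~ Ip n f y)).
  { apply functional_extensionality; intros y. apply propositional_extensionality.
    pose proof (ip_E n f y). tauto. }
  rewrite E1. rewrite <- (comp_iff n f d Hd FACT K).
  split; intros [e [He HK]]; exists e; split.
  - apply hyp_E; auto.
  - intros x. rewrite HK. apply cone_E.
  - apply hyp_E; auto.
  - intros x. rewrite HK. symmetry. apply cone_E.
Qed.
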